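(* Let $M$ be an $n\times n$ exceptional extremal copositive matrix that has exactly $n$ representative minimal zeros $\mathbf w_1,\dots,\mathbf w_n$, and let $W=[\mathbf w_1\ \mathbf w_2\ \cdots\ \mathbf w_n]$. Then every completely positive $n\times n$ matrix $A$ with $\operatorname{trace}(AM)=0$ has the form $A=WCW^T$ for some $n\times n$ completely positive matrix $C$, with $\operatorname{cp\text{-}rank}A=\operatorname{cp\text{-}rank}C$, and the number of CP factorizations (respectively, minimal CP factorizations) of $A$ equals the number of CP factorizations (respectively, minimal CP factorizations) of $C$.
   Context: A symmetric $n\times n$ matrix $A$ is completely positive if $A=BB^T$ for some entrywise nonnegative $n\times k$ matrix $B$; such an equality is a CP factorization of $A$. Only CP factorizations in which the columns of $B$ are pairwise linearly independent are considered, and two CP factorizations $A=BB^T=CC^T$ are considered equal if $C=BP$ for a permutation matrix $P$. The cp-rank of $A$ is the minimal number of columns of such a nonnegative $B$; a CP factorization with that many columns is called minimal. A symmetric matrix $M$ is copositive if $\mathbf x^TM\mathbf x\ge0$ for all $\mathbf x\in\mathbb R^n_+$; $\mathcal{COP}_n$ denotes the cone of such matrices, which is the dual of the completely positive cone under $\langle X,Y\rangle=\operatorname{trace}(XY)$. A copositive $M$ is exceptional if it is not the sum of a positive semidefinite matrix and a symmetric entrywise nonnegative matrix, and extremal if it generates an extreme ray of $\mathcal{COP}_n$. A zero of $M$ is a nonzero $\mathbf b\in\mathbb R^n_+$ with $\mathbf b^TM\mathbf b=0$; it is a minimal zero if its support does not strictly contain the support of another zero. A set of minimal zeros is representative if every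 minimal zero of $M$ is a positive scalar multiple of exactly one vector in the set. Known facts (Hildebrand), which may be used: every zero of a copositive $M$ is a nonnegative combination of finitely many minimal zeros, and an exceptional extremal copositive matrix in $\mathcal{COP}_n$ has at least $n$ representative minimal zeros, and these span $\mathbb R^n$. *)

(* Defs.v *)
From HB Require Import structures.
From mathcomp Require Import all_boot all_order all_algebra.
From mathcomp Require Import reals.
Set Implicit Arguments. Unset Strict Implicit. Unset Printing Implicit Defensive.
Import Order.TTheory GRing.Theory Num.Theory.
Local Open Scope ring_scope.

Section Defs.
Variable R : realType.

Definition nonneg_mx m k (B : 'M[R]_(m, k)) : Prop := forall i j, 0 <= B i j.

Definition sym_mx n (M : 'M[R]_n) : Prop := M^T = M.

Definition qform n (M : 'M[R]_n) (x : 'cV[R]_n) : R := (x^T *m M *m x) 0 0.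

Definition copositive n (M : 'M[R]_n) : Prop :=
  sym_mx M /\ forall x : 'cV[R]_n, nonneg_mx x -> 0 <= qform M x.

Definition psd n (P : 'M[R]_n) : Prop :=
  sym_mx P /\ forall x : 'cV[R]_n, 0 <= qform P x.

Definition exceptional n (M : 'M[R]_n) : Prop :=
  copositive M /\
  ~ (exists P N : 'M[R]_n, psd P /\ sym_mx N /\ nonneg_mx N /\ M = P + N).

Definition extremal n (M : 'M[R]_n) : Prop :=
  copositive M /\ M != 0 /\
  forall M1 M2 : 'M[R]_n, copositive M1 -> copositive M2 -> M = M1 + M2 ->
    exists a b : R, 0 <= a /\ 0 <= b /\ M1 = a *: M /\ M2 = b *: M.

Definition supp n (x : 'cV[R]_n) : {set 'I_n} := [set i | x i 0 != 0].

Definition is_zero n (M : 'M[R]_n) (x : 'cV[R]_n) : Prop :=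
  nonneg_mx x /\ x != 0 /\ qform M x = 0.

Definition minimal_zero n (M : 'M[R]_n) (x : 'cV[R]_n) : Prop :=
  is_zero M x /\ ~ (exists y, is_zero M y /\ supp y \proper supp x).

Definition representative_zeros n (M W : 'M[R]_n) : Prop :=
  (forall i, minimal_zero M (col i W)) /\
  forall u, minimal_zero M u ->
    exists! i : 'I_n, exists c : R, 0 < c /\ u = c *: col i W.

Definition completely_positive n (A : 'M[R]_n) : Prop :=
  exists k (B : 'M[R]_(n, k)), nonneg_mx B /\ A = B *m B^T.

Definition is_cp_rank n (A : 'M[R]_n) (r : nat) : Prop :=
  (exists B : 'M[R]_(n, r), nonneg_mx B /\ A = B *m B^T) /\
  forall k (B : 'M[R]_(n, k)), nonneg_mx B -> A = B *m B^T -> (r <= k)%N.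

Definition factor n := {k : nat & 'M[R]_(n, k)}.

Definition pairwise_lin_indep n k (B : 'M[R]_(n, k)) : Prop :=
  forall j1 j2 : 'I_k, j1 != j2 -> forall a b : R,
    a *: col j1 B + b *: col j2 B = 0 -> a = 0 /\ b = 0.

Definition cp_fact n (A : 'M[R]_n) (F : factor n) : Prop :=
  nonneg_mx (projT2 F) /\ pairwise_lin_indep (projT2 F) /\
  A = projT2 F *m (projT2 F)^T.

Definition min_cp_fact n (A : 'M[R]_n) (F : factor n) : Prop :=
  cp_fact A F /\ is_cp_rank A (projT1 F).

Definition fact_eq n (F G : factor n) : Prop :=
  exists f : 'I_(projT1 F) -> 'I_(projT1 G),
    bijective f /\ forall i j, projT2 G i (f j) = projT2 F i j.

(* the sets of factorizations satisfying P and Q, modulo fact_eq,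
   have the same cardinality (a bijection between the classes) *)
Definition same_number n (P Q : factor n -> Prop) : Prop :=
  exists T : factor n -> factor n,
    (forall F, P F -> Q (T F)) /\
    (forall F G, P F -> P G -> (fact_eq (T F) (T G) <-> fact_eq F G)) /\
    (forall G, Q G -> exists F, P F /\ fact_eq (T F) G).

End Defs.

(* Main.v *)
Require Import Defs.
From HB Require Import structures.
From mathcomp Require Import all_boot all_order all_algebra.
From mathcomp Require Import reals.
From mathcomp Require Import all_classical all_analysis.
From mathcomp Require Import ring lra.
Import Order.TTheory GRing.Theory Num.Theory.
Import numFieldNormedType.Exports.
Local Open Scope ring_scope.
Section Alg.
Variable R : realType.
Variable n : nat.
Implicit Types (M : 'M[R]_n) (x y z : 'cV[R]_n).

Definition bil M x y : R := (x^T *m M *m y) 0 0.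

Lemma bilE M x y : bil M x y = \sum_j \sum_i x i 0 * M i j * y j 0.
Proof.
rewrite /bil mxE; apply: eq_bigr => j _; rewrite mxE big_distrl /=.
by apply: eq_bigr => i _; rewrite mxE.
Qed.

Lemma bilDl M x y z : bil M (x + y) z = bil M x z + bil M y z.
Proof. by rewrite !bilE -big_split /=; apply: eq_bigr => i _; rewrite -big_split; apply: eq_bigr => j _; rewrite mxE !mulrDl. Qed.

Lemma bilDr M x y z : bil M z (x + y) = bil M z x + bil M z y.
Proof. by rewrite !bilE -big_split /=; apply: eq_bigr => i _; rewrite -big_split; apply: eq_bigr => j _; rewrite mxE !mulrDr. Qed.

Lemma bilZl M a x y : bil M (a *: x) y = a * bil M x y.
Proof. rewrite !bilE mulr_sumr; apply: eq_bigr => i _; rewrite mulr_sumr; apply: eq_bigr => j _; by rewrite mxE !mulrA. Qed.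

Lemma bilZr M a x y : bil M x (a *: y) = a * bil M x y.
Proof. rewrite !bilE mulr_sumr; apply: eq_bigr => i _; rewrite mulr_sumr; apply: eq_bigr => j _; rewrite mxE; ring. Qed.

Lemma bil_sym M x y : sym_mx M -> bil M x y = bil M y x.
Proof.
move=> sM; rewrite /bil.
transitivity ((x^T *m M *m y)^T 0 0); first by rewrite [RHS]mxE.
by rewrite !trmx_mul trmxK sM mulmxA.
Qed.

Lemma bilMx M x y : sym_mx M -> bil M x y = \sum_j (M *m x) j 0 * y j 0.
Proof.
move=> sM; rewrite bil_sym // /bil -mulmxA mxE.
apply: eq_bigr => j _; rewrite mulrC; congr (_ * _).
by rewrite mxE.
Qed.

Lemma qformE M x : qform M x = bil M x x.
Proof. by []. Qed.

Lemma qform_expand M x z t : sym_mx M ->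
  qform M (z + t *: x) = qform M z + 2 * t * bil M x z + t ^+ 2 * qform M x.
Proof.
move=> sM; rewrite !qformE bilDl !bilDr !bilZl !bilZr (bil_sym M x z sM).
ring.
Qed.

Lemma dE (j k : 'I_n) : (delta_mx j 0 : 'cV[R]_n) k 0 = (k == j)%:R.
Proof. by rewrite mxE eqxx andbT. Qed.

Lemma bil_delta M x j : sym_mx M -> bil M x (delta_mx j 0) = (M *m x) j 0.
Proof.
move=> sM; rewrite bilMx // (bigD1 j) //= big1 ?addr0.
  by rewrite dE eqxx mulr1.
by move=> k kj; rewrite dE (negbTE kj) mulr0.
Qed.

Lemma qform_delta M j : qform M (delta_mx j 0) = M j j.
Proof.
rewrite qformE bilE (bigD1 j) //= [X in _ + X]big1 ?addr0.
  rewrite (bigD1 j) //= [X in _ + X]big1 ?addr0; first by rewrite !dE !eqxx mulr1 mul1r.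
  by move=> k kj; rewrite dE (negbTE kj) mul0r mul0r.
move=> k kj; rewrite big1 // => i _; by rewrite [delta_mx j 0 k 0]dE (negbTE kj) mulr0.
Qed.

Lemma zero_Mx_ge0 M x : copositive M -> nonneg_mx x -> qform M x = 0 ->
  forall j, 0 <= (M *m x) j 0.
Proof.
move=> [sM cM] x0 qx j; rewrite leNgt; apply/negP => aneg.
set a := (M *m x) j 0 in aneg; set m := M j j.
set s := - a / (`|m| + 1).
have hm : 0 < `|m| + 1 by rewrite ltr_wpDl.
have s0 : 0 < s by rewrite divr_gt0 // oppr_gt0.
have nn : nonneg_mx (x + s *: delta_mx j 0).
  move=> i k; rewrite !mxE ord1 eqxx andbT; apply: addr_ge0; first exact: x0.
  by apply: mulr_ge0; [exact: ltW| case: (_ == _)].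
have := cM _ nn; rewrite qform_expand // qx bil_sym // bil_delta // qform_delta.
rewrite -/a -/m add0r.
have sm : s * m <= s * `|m| by rewrite ler_pM2l // ler_norm.
have hs : s * (`|m| + 1) = - a by rewrite /s divfK // gt_eqF.
have h1 : s * `|m| < - a by move: hs; rewrite mulrDr mulr1; lra.
move=> h2.
have : 0 <= s * (2 * a + s * m).
  have -> : s * (2 * a + s * m) = 2 * s * a + s ^+ 2 * m by rewrite expr2; ring.
  by [].
rewrite pmulr_rge0 //; lra.
Qed.

Lemma zero_Mx_supp M x : copositive M -> nonneg_mx x -> qform M x = 0 ->
  forall j, x j 0 != 0 -> (M *m x) j 0 = 0.
Proof.
move=> cM x0 qx j xj.
have sM := cM.1.
have h0 : forall k, true -> 0 <= (M *m x) k 0 * x k 0.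
  by move=> k _; apply: mulr_ge0; [exact: zero_Mx_ge0 | exact: x0].
have := psumr_eq0P h0; rewrite -bilMx // -qformE qx => /(_ erefl j isT) /eqP.
by rewrite mulf_eq0 (negbTE xj) orbF => /eqP.
Qed.

Lemma bil_zero_ge0 M x z : copositive M -> nonneg_mx x -> qform M x = 0 ->
  nonneg_mx z -> 0 <= bil M x z.
Proof.
move=> cM x0 qx z0; rewrite bilMx; last exact: cM.1.
by apply: sumr_ge0 => k _; apply: mulr_ge0; [exact: zero_Mx_ge0 | exact: z0].
Qed.

Lemma cV_neq0 x : x != 0 -> exists k, x k 0 != 0.
Proof.
move=> xn0; apply/existsP; apply: contraR xn0 => /existsPn h.
by apply/eqP/matrixP => i j; rewrite ord1 mxE; move/negPn: (h i) => /eqP.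
Qed.

Lemma supp_in x k : (k \in supp x) = (x k 0 != 0).
Proof. by rewrite inE. Qed.

Lemma zero_comb M W : copositive M -> representative_zeros M W ->
  forall u, is_zero M u -> exists c : 'cV[R]_n, nonneg_mx c /\ u = W *m c.
Proof.
move=> cM [repc repu].
have sM := cM.1.
suff : forall m u, (#|supp u| < m)%N -> is_zero M u ->
  exists c : 'cV[R]_n, nonneg_mx c /\ u = W *m c.
  by move=> H u; apply: (H _ u (ltnSn _)).
elim=> [//|m IH] u hu zu.
have [mu|nmu] := pselect (minimal_zero M u).
  have [i [[c [c0 uc]] _]] := repu u mu.
  exists (c *: delta_mx i 0); split.
    move=> a b; rewrite mxE ord1 dE; apply: mulr_ge0; first exact: ltW.
    by case: (_ == _).
  by rewrite uc -scalemxAr -colE.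
have [y [zy py]] : exists y, is_zero M y /\ supp y \proper supp u.
  apply: contrapT => h; apply: nmu; split => // -[y [zy py]]; apply: h.
case: zu => u0 [un0 qu]; case: (zy) => y0 [yn0 qy].
have [i0 yi0] := cV_neq0 _ yn0.
have syu : forall k, y k 0 != 0 -> u k 0 != 0.
  move=> k yk; have /fintype.subsetP := proper_sub py; move/(_ k).
  by rewrite !supp_in; apply.
pose F := fun k => u k 0 / y k 0.
have [kmin yk0 Fmin] : exists2 k, y k 0 != 0 & forall k', y k' 0 != 0 -> F k <= F k'.
  case: (@arg_minP _ _ _ i0 (fun k => y k 0 != 0) F yi0) => /= k yk h; exists k => //.
have ypos : forall k, y k 0 != 0 -> 0 < y k 0.
  by move=> k yk; rewrite lt_def yk y0.
have upos : forall k, u k 0 != 0 -> 0 < u k 0.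
  by move=> k uk; rewrite lt_def uk u0.
set t := F kmin.
have t0 : 0 < t by rewrite /t /F divr_gt0 // ?upos ?syu // ypos.
pose v := u + (- t) *: y.
have vE : forall k, v k 0 = u k 0 - t * y k 0.
  by move=> k; rewrite !mxE mulNr.
have v0 : nonneg_mx v.
  move=> a b; rewrite ord1 vE subr_ge0.
  have [yk|yk] := eqVneq (y a 0) 0; first by rewrite yk mulr0 u0.
  have := Fmin a yk; rewrite /F -/t ler_pdivlMr ?ypos //.
have vk0 : v kmin 0 = 0.
  by rewrite vE /t /F divfK // subrr.
have qv : qform M v = 0.
  rewrite /v qform_expand // qu qy mulr0 addr0.
  rewrite bil_sym // bilMx // big1 ?mulr0 ?addr0 // => k _.
  have [yk|yk] := eqVneq (y k 0) 0; first by rewrite yk mulr0.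
  by rewrite (zero_Mx_supp _ _ cM u0 qu _ (syu _ yk)) mul0r.
have svu : supp v \proper supp u.
  apply/properP; split.
    apply/fintype.subsetP => k; rewrite !supp_in vE => vk; apply/eqP => uk.
    have yk : y k 0 = 0 by apply/eqP; apply: contraT => /syu; rewrite uk eqxx.
    by move: vk; rewrite uk yk mulr0 subrr eqxx.
  by exists kmin; rewrite !supp_in ?syu // vk0 eqxx.
have hy : (#|supp y| < m)%N.
  by have := proper_card py; move=> h; apply: leq_trans h _.
have hv : (#|supp v| < m)%N.
  by have := proper_card svu; move=> h; apply: leq_trans h _.
have [cy [cy0 yE]] := IH y hy zy.
have ue : u = v + t *: y by rewrite /v -addrA -scalerDl addNr scale0r addr0.
have [vz|vn0] := eqVneq v 0.
  exists (t *: cy); split.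
    by move=> a b; rewrite mxE; apply: mulr_ge0; [exact: ltW| exact: cy0].
  by rewrite ue vz add0r yE scalemxAr.
have [cv [cv0 vE']] := IH v hv (conj v0 (conj vn0 qv)).
exists (cv + t *: cy); split.
  by move=> a b; rewrite !mxE; apply: addr_ge0; [exact: cv0|apply: mulr_ge0; [exact: ltW| exact: cy0]].
by rewrite ue mulmxDr vE' yE scalemxAr.
Qed.
Definition fq (M : 'M[R]_n) (v : 'rV[R]_n) : R :=
  \sum_j \sum_i v ord0 i * M i j * v ord0 j.

Lemma fq_cont M : continuous (fq M).
Proof.
apply: (@continuous_big _ _ +%R 0 xpredT add_continuous) => j _.
apply: (@continuous_big _ _ +%R 0 xpredT add_continuous) => i _.
move=> w.
apply: (continuousM (s := fun v : 'rV[R]_n => v ord0 i * M i j) (t := fun v => v ord0 j)); last exact: coord_continuous.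
apply: (continuousM (s := fun v : 'rV[R]_n => v ord0 i) (t := fun v => M i j)); last exact: cst_continuous.
exact: coord_continuous.
Qed.

Definition box (S : {set 'I_n}) (i : 'I_n) (j : 'I_n) : set R :=
  if j == i then `[1, 1]%classic else if j \in S then `[0, 1]%classic else `[0, 0]%classic.

Lemma box_compact S i : compact [set v : 'rV[R]_n | forall j, box S i j (v ord0 j)].
Proof.
apply: rV_compact => j; rewrite /box.
by case: ifP => _; [|case: ifP => _]; apply: segment_compact.
Qed.

Lemma box_min (M : 'M[R]_n) (S : {set 'I_n}) (i : 'I_n) : i \in S ->
  exists2 c : 'rV[R]_n, (forall j, box S i j (c ord0 j)) &
    forall v : 'rV[R]_n, (forall j, box S i j (v ord0 j)) -> fq M c <= fq M v.
Proof.
move=> iS.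
  have ne : ([set v : 'rV[R]_n | forall j, box S i j (v ord0 j)] !=set0)%classic.
  exists (\row_j (j == i)%:R) => j /=; rewrite mxE /box.
  case: eqP => _ /=; first by rewrite in_itv /= lexx.
  by case: ifP => _ /=; rewrite in_itv /= lexx // ler01.
have [c cA cmin] := EVT_min_rV ne (box_compact S i) (continuous_subspaceT (A := [set v : 'rV[R]_n | forall j, box S i j (v ord0 j)]) (fq_cont M)).
exists c; first by move: cA; rewrite in_setE.
by move=> v vA; apply: cmin; rewrite in_setE.
Qed.

Lemma fqE M v : fq M v = qform M v^T.
Proof.
rewrite qformE bilE /fq; apply: eq_bigr => j _; apply: eq_bigr => i _.
by rewrite ![v^T _ _]mxE.
Qed.

Lemma boxP (S : {set 'I_n}) i j a : box S i j a ->
  if j == i then a == 1 else if j \in S then 0 <= a <= 1 else a == 0.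
Proof.
rewrite /box; case: ifP => _ /=; first by rewrite in_itv /= => /andP [h1 h2]; rewrite eq_le h1 h2.
by case: ifP => _ /=; rewrite in_itv //= => /andP [h1 h2]; rewrite eq_le h1 h2.
Qed.

Definition hv (h y : 'cV[R]_n) : R := (h^T *m y) 0 0.

Lemma hvE h y : hv h y = \sum_j h j 0 * y j 0.
Proof. by rewrite /hv mxE; apply: eq_bigr => j _; rewrite mxE. Qed.

Lemma hvD h z x t : hv h (z + t *: x) = hv h z + t * hv h x.
Proof.
rewrite !hvE mulr_sumr -big_split; apply: eq_bigr => j _; rewrite !mxE.
by rewrite /= mulrDr mulrCA.
Qed.

Lemma qformZ M a y : qform M (a *: y) = a ^+ 2 * qform M y.
Proof. by rewrite !qformE bilZl bilZr mulrA expr2. Qed.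

Lemma common_eps (P : 'I_n -> R -> Prop) :
  (forall i e e', 0 < e' -> e' <= e -> P i e -> P i e') ->
  (forall i, exists2 e, 0 < e & P i e) -> exists2 e, 0 < e & forall i, P i e.
Proof.
move=> anti hP.
suff : forall s : seq 'I_n, exists2 e, 0 < e & forall i, i \in s -> P i e.
  by move=> /(_ (enum 'I_n)) [e e0 He]; exists e => // i; apply: He; rewrite mem_enum.
elim=> [|i s [e1 e10 He1]]; first by exists 1.
have [e2 e20 He2] := hP i.
exists (Order.min e1 e2); first by rewrite lt_min e10 e20.
move=> k; rewrite inE => /orP [/eqP -> | ks].
  by apply: (anti _ e2) => //; [rewrite lt_min e10 e20 | rewrite ge_min lexx orbT].
by apply: (anti _ e1) => //; [rewrite lt_min e10 e20 | rewrite ge_min lexx| exact: He1].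
Qed.

Lemma hard M h : copositive M -> (forall u, is_zero M u -> hv h u = 0) ->
  exists2 e, 0 < e & forall y, nonneg_mx y -> e * hv h y ^+ 2 <= qform M y.
Proof.
move=> cM hz; have sM := cM.1.
have anti : forall (Q : 'cV[R]_n -> Prop) e e', 0 < e' -> e' <= e ->
   (forall y, Q y -> e * hv h y ^+ 2 <= qform M y) ->
   (forall y, Q y -> e' * hv h y ^+ 2 <= qform M y).
  move=> Q e e' e0 le He y Qy; apply: le_trans (He y Qy).
  by apply: ler_wpM2r => //; exact: sqr_ge0.
suff H : forall m (S : {set 'I_n}), (#|S| < m)%N -> exists2 e, 0 < e &
   forall y, nonneg_mx y -> (forall i, i \notin S -> y i 0 = 0) ->
   e * hv h y ^+ 2 <= qform M y.
  have [e e0 He] := H _ [set: 'I_n] (ltnSn _).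
  by exists e => // y y0; apply: He => // i; rewrite inE.
elim=> [//|m IH] S hS.
have [[x [zx xS]]|nz] := pselect (exists x, is_zero M x /\ forall i, i \notin S -> x i 0 = 0).
  have [e e0 He] : exists2 e, 0 < e & forall i, i \in S -> forall y, nonneg_mx y ->
      (forall k, k \notin S :\ i -> y k 0 = 0) -> e * hv h y ^+ 2 <= qform M y.
    apply: (@common_eps (fun i e => i \in S -> forall y, nonneg_mx y ->
      (forall k, k \notin S :\ i -> y k 0 = 0) -> e * hv h y ^+ 2 <= qform M y)).
      move=> i e e' e'0 le Pie iS y y0 yS.
      apply: le_trans (Pie iS y y0 yS); apply: ler_wpM2r => //; exact: sqr_ge0.
    move=> i; case: (boolP (i \in S)) => iS; last by exists 1 => // iS'; move: iS; rewrite iS'.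
    have hc : (#|S :\ i| < m)%N.
      by move: hS; rewrite (cardsD1 i S) iS add1n ltnS.
    have [e e0 He] := IH _ hc; exists e => // _; exact: He.
  exists e => // y y0 yS.
  case: (zx) => x0 [xn0 qx].
  have [i0 xi0] := cV_neq0 _ xn0.
  pose F := fun k => y k 0 / x k 0.
  have [kmin xk0 Fmin] : exists2 k, x k 0 != 0 & forall k', x k' 0 != 0 -> F k <= F k'.
    by case: (@arg_minP _ _ _ i0 (fun k => x k 0 != 0) F xi0) => /= k xk hk; exists k.
  have xpos : forall k, x k 0 != 0 -> 0 < x k 0.
    by move=> k xk; rewrite lt_def xk x0.
  set t := F kmin.
  have t0 : 0 <= t by rewrite /t /F divr_ge0 // ltW // xpos.
  pose z := y + (- t) *: x.
  have zE : forall k, z k 0 = y k 0 - t * x k 0.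
    by move=> k; rewrite !mxE mulNr.
  have z0 : nonneg_mx z.
    move=> a b; rewrite ord1 zE subr_ge0.
    have [xk|xk] := eqVneq (x a 0) 0; first by rewrite xk mulr0 y0.
    by have := Fmin a xk; rewrite /F -/t ler_pdivlMr ?xpos.
  have zk : z kmin 0 = 0 by rewrite zE /t /F divfK // subrr.
  have kS : kmin \in S.
    by apply: contraT => /xS; move/eqP; rewrite (negbTE xk0).
  have zS : forall k, k \notin S :\ kmin -> z k 0 = 0.
    move=> k; rewrite in_setD1 negb_and negbK => /orP [/eqP -> //| kS'].
    by rewrite zE yS // xS // mulr0 subrr.
  have Hz := He kmin kS z z0 zS.
  have ye : y = z + t *: x by rewrite /z -addrA -scalerDl addNr scale0r addr0.
  rewrite ye qform_expand // qx mulr0 addr0 hvD (hz x zx) mulr0 addr0.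
  apply: le_trans Hz _; rewrite lerDl; apply: mulr_ge0.
    by apply: mulr_ge0 => //; rewrite ler0n.
  exact: bil_zero_ge0.
set H := \sum_j `|h j 0|.
have H0 : 0 <= H by apply: sumr_ge0 => j _.
have [e e0 He] : exists2 e, 0 < e & forall i, i \in S -> forall y, nonneg_mx y ->
    (forall k, k \notin S -> y k 0 = 0) -> 0 < y i 0 -> (forall j, y j 0 <= y i 0) ->
    e * hv h y ^+ 2 <= qform M y.
  apply: (@common_eps (fun i e => i \in S -> forall y, nonneg_mx y ->
    (forall k, k \notin S -> y k 0 = 0) -> 0 < y i 0 -> (forall j, y j 0 <= y i 0) ->
    e * hv h y ^+ 2 <= qform M y)).
    move=> i e e' e'0 le Pie iS y y0 yS yi ym.
    apply: le_trans (Pie iS y y0 yS yi ym); apply: ler_wpM2r => //; exact: sqr_ge0.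
  move=> i; case: (boolP (i \in S)) => iS; last by exists 1 => // iS'; move: iS; rewrite iS'.
  have [c cbox cmin] := box_min M S i iS.
  set mi := fq M c.
  have mi0 : 0 < mi.
    have c0 : nonneg_mx c^T.
      move=> a b; rewrite mxE ord1; have := boxP _ _ _ _ (cbox a).
      case: ifP => _; first by move=> /eqP ->.
      by case: ifP => _; [case/andP | move=> /eqP ->].
    rewrite lt_def /mi fqE (cM.2 _ c0) andbT; apply/eqP => q0; apply: nz.
    exists c^T; split; first split => //; first split => //.
      apply/negP => /eqP/matrixP/(_ i 0); rewrite mxE mxE.
      by have := boxP _ _ _ _ (cbox i); rewrite eqxx => /eqP ->; apply/eqP; rewrite oner_eq0.
    move=> k kS; rewrite mxE; have := boxP _ _ _ _ (cbox k).
    have -> : (k == i) = false by apply/negbTE; apply: contraNneq kS => ->.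
    by rewrite (negbTE kS) => /eqP.
  have hp : 0 < (1 + H) ^+ 2 by rewrite exprn_gt0 // ltr_pwDl.
  exists (mi / (1 + H) ^+ 2); first by rewrite divr_gt0.
  move=> _ y y0 yS yi ym.
  set s := y i 0 in yi ym.
  have sn0 : s != 0 by rewrite gt_eqF.
  have vbox : forall j, box S i j ((s^-1 *: y)^T ord0 j).
    move=> j; rewrite !mxE /box; case: eqP => [->|ji] /=.
      by rewrite in_itv /= mulVf // lexx.
    case: ifP => jS /=; rewrite in_itv /=.
      apply/andP; split; first by apply: mulr_ge0; [rewrite invr_ge0 ltW | exact: y0].
      by rewrite mulrC ler_pdivrMr // mul1r; exact: ym.
    by rewrite yS ?jS // mulr0 lexx.
  have := cmin _ vbox; rewrite fqE [fq _ _]fqE trmxK qformZ -/mi => hmi.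
  have qy : mi * s ^+ 2 <= qform M y.
    have : mi * s ^+ 2 <= (s^-1) ^+ 2 * qform M y * s ^+ 2.
      by rewrite /mi fqE; apply: ler_wpM2r; [exact: sqr_ge0| exact: hmi].
    have -> : s^-1 ^+ 2 * qform M y * s ^+ 2 = qform M y by field.
    by [].
  have hb : `|hv h y| <= H * s.
    rewrite hvE /H mulr_suml; apply: le_trans (ler_norm_sum _ _ _) _.
    apply: ler_sum => j _; rewrite normrM (ger0_norm (y0 j 0)).
    by apply: ler_wpM2l => //; exact: ym.
  have hb2 : hv h y ^+ 2 <= ((1 + H) * s) ^+ 2.
    rewrite -real_normK ?num_real // !expr2; apply: ler_pM => //.
      by apply: le_trans hb _; apply: ler_wpM2r; [exact: ltW | rewrite lerDr ler01].
    by apply: le_trans hb _; apply: ler_wpM2r; [exact: ltW | rewrite lerDr ler01].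
  apply: le_trans qy; apply: le_trans (ler_wpM2l _ hb2) _.
    by rewrite divr_ge0 ?ltW.
  rewrite exprMn mulrA divfK ?gt_eqF //.
exists e => // y y0 yS.
have [yz|yn0] := eqVneq y 0.
  by rewrite yz /hv mulmx0 mxE expr0n /= mulr0; apply: cM.2; rewrite -yz.
have [k yk] := cV_neq0 _ yn0.
pose G := fun j => y j 0.
case: (@arg_maxP _ _ _ k xpredT G isT) => /= i _ imax.
have ypos : 0 < y i 0.
  apply: lt_le_trans (imax k isT); by rewrite lt_def yk y0.
have iS : i \in S by apply: contraT => /yS => yi; move: ypos; rewrite yi ltxx.
by apply: (He i iS y y0 yS ypos) => j; apply: imax.
Qed.

Lemma qformD M1 M2 x : qform (M1 + M2) x = qform M1 x + qform M2 x.
Proof. by rewrite /qform mulmxDr mulmxDl mxE. Qed.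

Lemma qformZm a M x : qform (a *: M) x = a * qform M x.
Proof. by rewrite /qform -scalemxAr -scalemxAl mxE. Qed.

Lemma qformN M x : qform (- M) x = - qform M x.
Proof. by rewrite -scaleN1r qformZm mulN1r. Qed.

Lemma mx11_mul (A B : 'M[R]_1) : (A *m B) 0 0 = A 0 0 * B 0 0.
Proof. by rewrite mxE big_ord1. Qed.

Lemma qform_hh h x : qform (h *m h^T) x = hv h x ^+ 2.
Proof.
rewrite /qform mulmxA -mulmxA mx11_mul expr2 /hv; congr (_ * _).
transitivity ((x^T *m h)^T 0 0); first by rewrite [RHS]mxE.
by rewrite trmx_mul trmxK.
Qed.

Lemma hh_eq0 (h : 'cV[R]_n) e : 0 < e -> e *: (h *m h^T) = 0 -> h = 0.
Proof.
move=> e0 H; apply/matrixP => i j; rewrite ord1 mxE.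
have := congr1 (fun X : 'M[R]_n => X i i) H; rewrite !mxE big_ord1 mxE.
move/eqP; rewrite mulf_eq0 (gt_eqF e0) /= mulf_eq0 orbb => /eqP //.
Qed.

Lemma sym_hh (h : 'cV[R]_n) : sym_mx (h *m h^T).
Proof. by rewrite /sym_mx trmx_mul trmxK. Qed.

Lemma nonneg_mul m k p (X : 'M[R]_(m, k)) (B : 'M[R]_(k, p)) :
  nonneg_mx X -> nonneg_mx B -> nonneg_mx (X *m B).
Proof.
by move=> X0 B0 i j; rewrite mxE; apply: sumr_ge0 => l _; apply: mulr_ge0.
Qed.

Lemma col_mulmx m k p (X : 'M[R]_(m, k)) (B : 'M[R]_(k, p)) j :
  col j (X *m B) = X *m col j B.
Proof. by rewrite !colE mulmxA. Qed.

Lemma W_unit M W : exceptional M -> extremal M -> representative_zeros M W ->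
  W \in unitmx.
Proof.
move=> [cM nPN] [_ [Mn0 ext]] rep.
have sM := cM.1.
apply: contraT => Wn; move: Wn; rewrite -row_free_unit -kermx_eq0 => /negP Kn.
have [k rk] : exists k, row k (kermx W) != 0.
  apply: contrapT => hn; apply: Kn; apply/eqP/row_matrixP => k; rewrite row0.
  by apply/eqP; apply: contrapT => /negP hk; apply: hn; exists k.
set r := row k (kermx W) in rk.
have rW : r *m W = 0 by rewrite /r -row_mul mulmx_ker row0.
set h := r^T.
have hz : forall u, is_zero M u -> hv h u = 0.
  move=> u zu; have [c [_ ->]] := zero_comb M W cM rep u zu.
  by rewrite /hv /h trmxK mulmxA rW mul0mx mxE.
have [e e0 He] := hard M h cM hz.
set M2 := e *: (h *m h^T).
set M1 := M - M2.
have cM1 : copositive M1.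
  split.
    by rewrite /sym_mx /M1 /M2 linearB /= linearZ /= sM (sym_hh h).
  move=> x x0; rewrite /M1 qformD qformN /M2 qformZm qform_hh subr_ge0; exact: He.
have cM2 : copositive M2.
  split; first by rewrite /sym_mx /M2 linearZ /= (sym_hh h).
  by move=> x x0; rewrite /M2 qformZm qform_hh; apply: mulr_ge0; [exact: ltW | exact: sqr_ge0].
have [a [b [a0 [b0 [_ M2E]]]]] := ext M1 M2 cM1 cM2 (esym (subrK M2 M)).
have [bz|bn0] := eqVneq b 0.
  have h0 : h = 0 by apply: (hh_eq0 _ _ e0); rewrite -/M2 M2E bz scale0r.
  by move: rk; rewrite -[r]trmxK -/h h0 trmx0 eqxx.
exfalso; apply: nPN; exists M, 0; split; last first.
  split; first by rewrite /sym_mx trmx0.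
  by split; [move=> i j; rewrite mxE | rewrite addr0].
split => // x.
have -> : M = b^-1 *: M2 by rewrite M2E scalerA mulVf // scale1r.
rewrite qformZm /M2 qformZm qform_hh; apply: mulr_ge0; first by rewrite invr_ge0.
by apply: mulr_ge0; [exact: ltW | exact: sqr_ge0].
Qed.

Lemma tr_qform M k (B : 'M[R]_(n, k)) :
  \tr (B *m B^T *m M) = \sum_j qform M (col j B).
Proof.
rewrite -mulmxA mxtrace_mulC /mxtrace; apply: eq_bigr => j _.
rewrite qformE bilE mxE; apply: eq_bigr => l _; rewrite mxE big_distrl.
by apply: eq_bigr => i _; rewrite !mxE.
Qed.

Lemma factor_nonneg M W k (B : 'M[R]_(n, k)) :
  copositive M -> representative_zeros M W -> W \in unitmx ->
  nonneg_mx B -> \tr (B *m B^T *m M) = 0 -> nonneg_mx (invmx W *m B).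
Proof.
move=> cM rep Wu B0 tr0.
have c0 : forall j, nonneg_mx (col j B) by move=> j a b; rewrite mxE; exact: B0.
have h0 : forall j, true -> 0 <= qform M (col j B) by move=> j _; exact: cM.2.
have q0 := psumr_eq0P h0; rewrite -tr_qform in q0.
move=> i j.
have -> : (invmx W *m B) i j = (invmx W *m col j B) i 0 by rewrite -col_mulmx [RHS]mxE.
have [cz|cn0] := eqVneq (col j B) 0; first by rewrite cz mulmx0 mxE.
have [c [cc ->]] := zero_comb M W cM rep (col j B) (conj (c0 j) (conj cn0 (q0 tr0 j isT))).
by rewrite mulmxA mulVmx // mul1mx.
Qed.

Lemma indep_transfer k (X Y : 'M[R]_n) (B : 'M[R]_(n, k)) :
  Y *m X = 1%:M -> pairwise_lin_indep B -> pairwise_lin_indep (X *m B).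
Proof.
move=> YX ind j1 j2 jn a b H; apply: (ind j1 j2 jn a b).
have : Y *m (a *: col j1 (X *m B) + b *: col j2 (X *m B)) = 0 by rewrite H mulmx0.
by rewrite !col_mulmx !scalemxAr -mulmxDr mulmxA YX mul1mx.
Qed.

Lemma main_sec M W : exceptional M -> extremal M -> representative_zeros M W ->
  forall A : 'M[R]_n, completely_positive A -> \tr (A *m M) = 0 ->
  exists C : 'M[R]_n,
    [/\ completely_positive C,
        A = W *m C *m W^T,
        (forall r, is_cp_rank A r <-> is_cp_rank C r),
        same_number (cp_fact A) (cp_fact C)
      & same_number (min_cp_fact A) (min_cp_fact C)].
Proof.
move=> ex et rep A [k0 [Bz [Bz0 AE]]] trA.
have cM := ex.1.
have Wu := W_unit M W ex et rep.
set V := invmx W.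
have VW : V *m W = 1%:M by apply: mulVmx.
have WV : W *m V = 1%:M by apply: mulmxV.
have W0 : nonneg_mx W.
  by move=> i j; have := (rep.1 j).1.1 i 0; rewrite mxE.
set C := V *m A *m V^T.
have AC : A = W *m C *m W^T.
  by rewrite /C !mulmxA WV mul1mx -mulmxA -trmx_mul WV trmx1 mulmx1.
have FA : forall k (B : 'M[R]_(n, k)), nonneg_mx B -> A = B *m B^T ->
    nonneg_mx (V *m B) /\ C = (V *m B) *m (V *m B)^T.
  move=> k B B0 Be; split.
    by apply: (factor_nonneg M W k B cM rep Wu B0); rewrite -Be.
  by rewrite /C Be trmx_mul !mulmxA.
have FC : forall k (K : 'M[R]_(n, k)), nonneg_mx K -> C = K *m K^T ->
    nonneg_mx (W *m K) /\ A = (W *m K) *m (W *m K)^T.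
  move=> k K K0 Ke; split; first exact: nonneg_mul.
  by rewrite AC Ke trmx_mul !mulmxA.
have rankE : forall r, is_cp_rank A r <-> is_cp_rank C r.
  move=> r; split => [[[B [B0 Be]] mn] | [[K [K0 Ke]] mn]].
    split; first by exists (V *m B); apply: FA.
    by move=> k K K0 Ke; have [h1 h2] := FC k K K0 Ke; exact: mn _ _ h1 h2.
  split; first by exists (W *m K); apply: FC.
  by move=> k B B0 Be; have [h1 h2] := FA k B B0 Be; exact: mn _ _ h1 h2.
pose T := fun F : Defs.factor R n => existT (fun k => 'M[R]_(n, k)) (projT1 F) (V *m projT2 F).
have feq : forall F G : Defs.factor R n, fact_eq (T F) (T G) <-> fact_eq F G.
  move=> [kF BF] [kG BG]; rewrite /fact_eq /=; split => -[f [bf hf]]; exists f; split => //.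
    pose BGf := \matrix_(i, j) BG i (f j) : 'M[R]_(n, kF).
    have e1 : V *m BGf = V *m BF.
      apply/matrixP => a b; rewrite -hf !mxE; apply: eq_bigr => l _; by rewrite mxE.
    have e2 : BGf = BF by have := congr1 (mulmx W) e1; rewrite !mulmxA WV !mul1mx.
    by move=> i j; have := congr1 (fun X : 'M[R]_(n, kF) => X i j) e2; rewrite /= mxE.
  by move=> i j; rewrite !mxE; apply: eq_bigr => l _; rewrite hf.
have Tcp : forall F, cp_fact A F -> cp_fact C (T F).
  move=> [k B] [B0 [ind Be]]; rewrite /cp_fact /=.
  have [h1 h2] := FA k B B0 Be; split => //; split => //.
  exact: (indep_transfer k V W B WV).
have Tsurj : forall G, cp_fact C G -> exists F, cp_fact A F /\ fact_eq (T F) G.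
  move=> [k K] [K0 [ind Ke]]; exists (existT _ k (W *m K)).
  have [h1 h2] := FC k K K0 Ke; split.
    split => //; split => //; exact: (indep_transfer k W V K VW).
  exists id; split; first by exists id.
  by move=> i j; rewrite /= mulmxA VW mul1mx.
exists C; split.
- by have [h1 h2] := FA k0 Bz Bz0 AE; exists k0, (V *m Bz).
- exact: AC.
- exact: rankE.
- exists T; split; first exact: Tcp.
  by split; [move=> F G _ _; exact: feq | exact: Tsurj].
- exists T; split.
    by move=> F [cF rF]; split; [exact: Tcp | exact/rankE].
  split; first by move=> F G _ _; exact: feq.
  move=> G [cG rG]; have [F [cF eF]] := Tsurj G cG.
  exists F; split => //; split => //.
  have eqk : projT1 F = projT1 G.
    by case: eF => f [bf _]; have := bij_eq_card bf; rewrite /= !card_ord.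
  by apply/rankE; rewrite eqk.
Qed.
End Alg.

Theorem lemma4p5 (R : realType) (n : nat) (M W : 'M[R]_n) :
  exceptional M -> extremal M -> representative_zeros M W ->
  forall A : 'M[R]_n, completely_positive A -> \tr (A *m M) = 0 ->
  exists C : 'M[R]_n,
    [/\ completely_positive C,
        A = W *m C *m W^T,
        (forall r, is_cp_rank A r <-> is_cp_rank C r),
        same_number (cp_fact A) (cp_fact C)
      & same_number (min_cp_fact A) (min_cp_fact C)].
Proof. exact: main_sec. Qed.
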